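(* Let $G=A_{n,k}$ be an almost-path graph and let $\mathcal{I}$ be a lower order ideal in the poset (ordered by inclusion) of vertex sets $\varnothing\neq I\subseteq[n+1]$ with $G[I]$ connected. Then the ideal subarrangement $\mathcal{A}_{\mathcal{I}}:=\{H_I\mid I\in\mathcal{I}\}$ of $\mathcal{A}_G$ is MAT-free.
   Context: For $1\le k\le n$, the almost-path graph $A_{n,k}$ has vertex set $[n+1]$ and edges $\{i,i+1\}$ for $1\le i\le n-1$ together with $\{k,n+1\}$. For a graph $G$ on $[m]$, $H_I:=\ker(\sum_{i\in I}x_i)\subseteq\mathbb{Q}^m$ and $\mathcal{A}_G:=\{H_I\mid\varnothing\neq I\subseteq[m],\ G[I]\text{ connected}\}$. An arrangement $\mathcal{A}$ in $V$ is MAT-free if there is an ordered partition $(\pi_1|\dots|\pi_r)$ of $\mathcal{A}$ such that, with $\mathcal{A}_0:=\varnothing$ and $\mathcal{A}_k:=\pi_1\cup\dots\cup\pi_k$, for every $0\le k\le r-1$: (1) the hyperplanes of $\pi_{k+1}$ are linearly independent (rank $|\pi_{k+1}|$); (2) $\bigcap_{H\in\pi_{k+1}}H\not\subseteq\bigcup_{H'\in\mathcal{A}_k}H'$; (3) $|\mathcal{A}_k|-|\{H\cap H'\mid H'\in\mathcal{A}_k\}|=k$ for each $H\in\pi_{k+1}$. *)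

(* Defs.v *)
From HB Require Import structures.
From mathcomp Require Import all_boot all_order all_algebra.
Set Implicit Arguments. Unset Strict Implicit. Unset Printing Implicit Defensive.
Import GRing.Theory.
Local Open Scope ring_scope.

(* Vertices of a graph on [m] are represented by 'I_m (vertex i+1 <-> ordinal i). *)

(* The almost-path graph A_{n,k} on [n+1] (0-based: 'I_(n.+1)):
   edges {i,i+1} (1 <= i <= n-1), i.e. 0-based {j,j+1} with j+1 < n,
   plus the edge {k, n+1}, i.e. 0-based {k-1, n}. *)
Definition almost_path_edge (n k : nat) (i j : 'I_(n.+1)) : bool :=
  [|| ((i : nat).+1 == j) && (j < n)%N,
      ((j : nat).+1 == i) && (i < n)%N,
      ((i : nat) == k.-1) && ((j : nat) == n)
    | ((j : nat) == k.-1) && ((i : nat) == n)].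

(* G[I] is connected (I nonempty is required separately). *)
Definition induced_connected (m : nat) (G : rel 'I_m) (I : {set 'I_m}) : bool :=
  [forall x in I, forall y in I,
     connect [rel u v | [&& u \in I, v \in I & G u v]] x y].

Definition connected_sets (m : nat) (G : rel 'I_m) : {set {set 'I_m}} :=
  [set I : {set 'I_m} | (I != set0) && induced_connected G I].

Definition lower_ideal (m : nat) (G : rel 'I_m) (Id : {set {set 'I_m}}) : Prop :=
  Id \subset connected_sets G /\
  forall I J : {set 'I_m}, I \in Id -> J \in connected_sets G -> J \subset I -> J \in Id.

Definition ind_col (m : nat) (I : {set 'I_m}) : 'cV[rat]_m :=
  \col_(i < m) (if i \in I then 1 else 0).

Definition hyp (m : nat) (I : {set 'I_m}) : {vspace 'rV[rat]_m} :=
  lker (linfun (fun v : 'rV[rat]_m => v *m ind_col I)).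

Definition ideal_arr (m : nat) (Id : {set {set 'I_m}}) : seq {vspace 'rV[rat]_m} :=
  undup [seq hyp J | J <- enum Id].

(* MAT-free: an arrangement (as a finite set = seq up to duplicates) admits an
   ordered partition (pi_1|...|pi_r) satisfying (1)-(3). Block pi_{k+1} is
   nth [::] pis k (0-based), A_k = pi_1 ∪ ... ∪ pi_k = flatten (take k pis). *)
Definition MAT_free (K : fieldType) (vT : vectType K) (A : seq {vspace vT}) : Prop :=
  exists pis : seq (seq {vspace vT}),
    all (fun pi => pi != [::]) pis /\
    perm_eq (flatten pis) (undup A) /\
    forall k : nat, (k < size pis)%N ->
      let pi := nth [::] pis k in
      let Ak := flatten (take k pis) in
      let X := (\bigcap_(H <- pi) H)%VS in
      (* (1) the hyperplanes of pi_{k+1} are independent: rank = |pi_{k+1}| *)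
      (\dim {:vT} - \dim X)%N = size pi /\
      (exists2 v, v \in X & forall H', H' \in Ak -> v \notin H') /\
      (forall H, H \in pi ->
         (size Ak - size (undup [seq (H :&: H')%VS | H' <- Ak]))%N = k).

(* Main.v *)
Require Import Defs.
From mathcomp Require Import all_boot all_order all_algebra.
From mathcomp Require Import zify.
Set Implicit Arguments. Unset Strict Implicit. Unset Printing Implicit Defensive.
Import Order.TTheory GRing.Theory Num.Theory.

Local Open Scope ring_scope.

Section LinAlg.
Variable m : nat.
Implicit Types (I J : {set 'I_m}) (v : 'rV[rat]_m).

Definition sumv v J := \sum_(i in J) v 0 i.

Lemma mul_ind v J : (v *m ind_col J) 0 0 = sumv v J.
Proof.
rewrite !mxE /sumv [RHS]big_mkcond /=; apply: eq_bigr => i _.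
by rewrite mxE; case: (i \in J); rewrite ?mulr1 ?mulr0.
Qed.

Lemma mem_hyp v J : (v \in hyp J) = (sumv v J == 0).
Proof.
rewrite /hyp memv_ker (lfunE (mulmxr (ind_col J))) /=.
apply/eqP/eqP => [/matrixP/(_ 0 0)| H].
  by rewrite mul_ind mxE.
by apply/matrixP => i j; rewrite !ord1 mul_ind H mxE.
Qed.

Definition vec (f : 'I_m -> rat) : 'rV[rat]_m := \row_(i < m) f i.

Lemma sumv_vec f J : sumv (vec f) J = \sum_(i in J) f i.
Proof. by apply: eq_bigr => i _; rewrite mxE. Qed.

Lemma sum_delta (a : 'I_m) J : \sum_(i in J) ((i == a)%:R : rat) = (a \in J)%:R.
Proof.
case: (boolP (a \in J)) => aJ.
  rewrite (bigD1 a) //= eqxx big1 ?addr0 // => i /andP[_ /negbTE ->]; by [].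
by rewrite big1 // => i iJ; case: eqP => // ei; rewrite -ei iJ in aJ.
Qed.

Definition ev (a : 'I_m) := vec (fun i => (i == a)%:R).

Lemma sumv_ev a J : sumv (ev a) J = (a \in J)%:R.
Proof. by rewrite sumv_vec sum_delta. Qed.

Lemma hyp_inj : injective (@hyp m).
Proof.
move=> I J eIJ; apply/setP => a.
have := mem_hyp (ev a) I; have := mem_hyp (ev a) J; rewrite eIJ !sumv_ev => -> .
by case: (a \in I); case: (a \in J); rewrite ?pnatr_eq0.
Qed.

Lemma dim_full : \dim (fullv : {vspace 'rV[rat]_m}) = m.
Proof. by rewrite dimvf; exact: (etrans (dim_matrix _ 1 m) (mul1n m)). Qed.

Lemma dim_hyp J : J != set0 -> \dim (hyp J) = m.-1.
Proof.
case/set0Pn => a aJ.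
set f := linfun (fun v : 'rV[rat]_m => v *m ind_col J).
have := limg_ker_dim f fullv; rewrite capfv dim_full.
have -> : \dim (f @: fullv) = 1%N.
  apply/eqP; rewrite eqn_leq; apply/andP; split.
    by rewrite (leq_trans (dimvS (subvf _))) // dimvf (dim_matrix _ 1 1).
  rewrite lt0n dimv_eq0; apply/negP => /eqP e0.
  have := memv_img f (memvf (ev a)); rewrite e0 memv0 => /eqP fa.
  have : ev a \in hyp J by rewrite /hyp memv_ker fa.
  by rewrite mem_hyp sumv_ev aJ oner_eq0.
by move=> e; rewrite -[in RHS]e addn1.
Qed.

Lemma mem_bigcap v (s : seq {vspace 'rV[rat]_m}) :
  (v \in (\big[capv/fullv]_(H <- s) H)) = all (fun H : {vspace 'rV[rat]_m} => v \in H) s.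
Proof.
elim: s => [|H s IH]; first by rewrite big_nil memvf.
by rewrite big_cons memv_cap IH.
Qed.

Lemma dim_cap_hyp (U : {vspace 'rV[rat]_m}) J : J != set0 -> ~~ (U <= hyp J)%VS ->
  \dim (U :&: hyp J) = (\dim U).-1.
Proof.
move=> J0 nUH.
have hm : (0 < m)%N by case/set0Pn: J0 => a _; apply: leq_ltn_trans (ltn_ord a).
have := dimv_sum_cap U (hyp J); rewrite dim_hyp //.
have -> : (U + hyp J)%VS = fullv.
  apply/eqP; rewrite eqEdim subvf dim_full /=.
  have := dimv_leqif_eq (addvSr U (hyp J)).
  rewrite dim_hyp // => -[le eq].
  have : (hyp J != U + hyp J)%VS.
    by apply: contra nUH => /eqP ->; rewrite addvSl.
  rewrite -eq => ne; have := le; rewrite leq_eqVlt (negbTE ne) /=.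
  by rewrite prednK.
rewrite dim_full => e.
have hU : (0 < \dim U)%N.
  rewrite lt0n dimv_eq0; apply: contra nUH => /eqP ->; exact: sub0v.
by move: e; set d := \dim (U :&: hyp J); set u := \dim U; lia.
Qed.

Definition witnessed (s : seq {set 'I_m}) :=
  forall i, (i < size s)%N -> exists y, (forall j, (j < i)%N -> y \in hyp (nth set0 s j)) /\
      y \notin hyp (nth set0 s i).

Lemma dim_witnessed s : all (fun J => J != set0) s -> witnessed s ->
  (\dim (\big[capv/fullv]_(H <- map (@hyp m) s) H) + size s)%N = m.
Proof.
elim/last_ind: s => [|s S IH]; first by rewrite big_nil addn0 dim_full.
rewrite all_rcons => /andP[S0 s0] W.
have Ws : witnessed s.
  move=> i lt; have lt' : (i < size (rcons s S))%N by rewrite size_rcons ltnS ltnW.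
  have [y [h1 h2]] := W i lt'.
  exists y; split.
    by move=> j ji; have := h1 j ji; rewrite nth_rcons (ltn_trans ji lt).
  by move: h2; rewrite nth_rcons lt.
have hs : (size s < size (rcons s S))%N by rewrite size_rcons.
have [y [h1 h2]] := W (size s) hs.
rewrite map_rcons -cats1 big_cat big_seq1 /= size_rcons dim_cap_hyp //.
  have IHs := IH s0 Ws.
  have : (0 < \dim (\big[capv/fullv]_(H <- map (@hyp m) s) H))%N.
    rewrite lt0n dimv_eq0; apply/negP => /eqP e0.
    have : y \in (\big[capv/fullv]_(H <- map (@hyp m) s) H).
      rewrite mem_bigcap; apply/(all_nthP 0%VS) => j.
      rewrite size_map => js; rewrite (nth_map set0) //.
      by have := h1 j js; rewrite nth_rcons js.
    by rewrite e0 memv0 => /eqP y0; move: h2; rewrite y0 mem0v.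
  by move: IHs; set d := \dim _; lia.
apply/negP => sub; move: h2; rewrite nth_rcons ltnn eqxx => /negP; apply.
apply: (subvP sub); rewrite mem_bigcap; apply/(all_nthP 0%VS) => j.
rewrite size_map => js; rewrite (nth_map set0) //.
by have := h1 j js; rewrite nth_rcons js.
Qed.

Lemma sumvD u w J : sumv (u + w) J = sumv u J + sumv w J.
Proof. by rewrite /sumv -big_split; apply: eq_bigr => i _; rewrite mxE. Qed.
Lemma sumvN u J : sumv (- u) J = - sumv u J.
Proof. by rewrite /sumv -sumrN; apply: eq_bigr => i _; rewrite mxE. Qed.
Lemma sumvB u w J : sumv (u - w) J = sumv u J - sumv w J.
Proof. by rewrite sumvD sumvN. Qed.

Lemma sumv_split v I J : J \subset I -> sumv v I = sumv v J + sumv v (I :\: J).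
Proof.
move=> sub; rewrite /sumv (big_setID J) /=; congr (_ + _).
by apply: eq_bigl => i; rewrite !inE; case: (boolP (i \in J)) => iJ; rewrite ?andbF ?andbT // (subsetP sub _ iJ).
Qed.

Lemma cap_split I J : J \subset I -> (hyp I :&: hyp J = hyp I :&: hyp (I :\: J))%VS.
Proof.
move=> sub; apply/vspaceP => v; rewrite !memv_cap !mem_hyp (sumv_split v sub).
case: (eqVneq (sumv v J) 0) => [->|nJ]; first by rewrite add0r ?eqxx ?andbT ?andbb.
rewrite andbF; case: (eqVneq (sumv v (I :\: J)) 0) => [->|]; last by rewrite ?andbF.
by rewrite addr0 (negbTE nJ).
Qed.

Lemma cap_eq I J J' : (hyp I :&: hyp J = hyp I :&: hyp J')%VS ->
  ~~ (I \subset J) -> ~~ (I \subset J') -> J = J' \/ (J \subset I /\ J' = I :\: J).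
Proof.
move=> e nIJ nIJ'.
have F : forall y, (sumv y I == 0) && (sumv y J == 0) = (sumv y I == 0) && (sumv y J' == 0).
  by move=> y; rewrite -!mem_hyp -!memv_cap e.
have F1 : forall a, a \notin I -> (a \in J) = (a \in J').
  move=> a aI; have := F (ev a); rewrite !sumv_ev (negbTE aI) eqxx /=.
  by case: (a \in J); case: (a \in J'); rewrite ?oner_eq0 ?eqxx.
have [c cI cJ] : exists2 c, c \in I & c \notin J.
  by move/subsetPn: nIJ => [c cI cJ]; exists c.
have F2 : forall a, a \in I -> (a \in J) = (a \in J') (+) (c \in J').
  move=> a aI; have := F (ev a - ev c); rewrite !sumvB !sumv_ev aI cI (negbTE cJ) subrr eqxx /=.
  by case: (a \in J); case: (a \in J'); case: (c \in J'); rewrite ?subr0 ?subrr ?oner_eq0 ?eqxx //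
     ?sub0r ?oppr_eq0 ?oner_eq0.
case: (boolP (c \in J')) => cJ'.
- case: (boolP (J \subset I)) => JI.
    right; split => //; apply/setP => a; rewrite inE.
    case: (boolP (a \in I)) => aI; first by rewrite F2 // cJ' addbT negbK andbT.
    by rewrite andbF -F1 //; apply: contraNF aI => /(subsetP JI).
  move/subsetPn: JI => [a aJ aI].
  have aJ' : a \in J' by rewrite -F1.
  have [d dI dJ'] : exists2 d, d \in I & d \notin J'.
    by move/subsetPn: nIJ' => [d dI dJ']; exists d.
  have dJ : d \in J by rewrite F2 // cJ' addbT.
  have := F (ev a - ev d + ev c); rewrite !sumvD !sumvN !sumv_ev (negbTE aI) dI cI aJ dJ
    (negbTE cJ) aJ' (negbTE dJ') cJ' /=.
  rewrite ?mulr0n ?mulr1n subrr ?addr0 ?add0r eqxx.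
  by rewrite (_ : 1 + 1 = 2%:R) // pnatr_eq0.
- left; apply/setP => a; case: (boolP (a \in I)) => aI; last exact: F1.
  by rewrite F2 // (negbTE cJ') addbF.
Qed.

Lemma ev_in (a : 'I_m) J : a \in J -> ev a \notin hyp J.
Proof. by move=> aJ; rewrite mem_hyp sumv_ev aJ oner_eq0. Qed.
Lemma ev_out (a : 'I_m) J : a \notin J -> ev a \in hyp J.
Proof. by move=> aJ; rewrite mem_hyp sumv_ev (negbTE aJ) eqxx. Qed.

End LinAlg.

Section Graph.
Variables n k : nat.
Hypothesis hk1 : (1 <= k)%N.
Hypothesis hkn : (k <= n)%N.
Local Notation V := 'I_(n.+1).

Local Notation p := (k.-1).
Lemma hp : (p < n)%N. Proof. lia. Qed.
Definition o : V := ord_max.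
Definition pv : V := inord p.
Lemma pvE : (pv : nat) = p. Proof. rewrite /pv inordK //; have := hp; lia. Qed.
Definition G := @almost_path_edge n k.

Lemma oE (u : V) : (u == o) = ((u:nat) == n).
Proof. by []. Qed.
Lemma ltn_o (u : V) : u != o -> (u < n)%N.
Proof. rewrite oE => h; have := ltn_ord u; lia. Qed.

Definition R (T : {set V}) := [rel u v : V | [&& u \in T, v \in T & G u v]].

Lemma G_sym : symmetric G.
Proof. move=> u v; rewrite /G /almost_path_edge; lia. Qed.

Lemma R_sym T : symmetric (R T).
Proof. by move=> u v /=; rewrite G_sym; case: (u \in T); case: (v \in T). Qed.

Definition convP (T : {set V}) :=
  (forall x y z : V, x \in T -> y \in T -> (x <= z <= y)%N -> (y < n)%N -> z \in T) /\
  (o \in T -> (exists2 v : V, v \in T & (v < n)%N) -> pv \in T).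

Lemma conn_conv T : induced_connected G T -> convP T.
Proof.
move=> /forallP C; split.
- move=> x y z xT yT /andP[xz zy] yn; apply/negPn/negP => zT.
  have cxy : connect (R T) x y by have := C x; rewrite xT /= => /forallP/(_ y); rewrite yT.
  pose A := [pred u : V | (u < z)%N || (((u:nat) == n) && (p < z)%N)].
  have cl : closed (R T) A.
    move=> u v /= /and3P[uT vT]; rewrite /G /almost_path_edge => e.
    have uz : (u:nat) != (z:nat) by apply: contraNneq zT => /val_inj <-.
    have vz : (v:nat) != (z:nat) by apply: contraNneq zT => /val_inj <-.
    rewrite !inE; have := ltn_ord u; have := ltn_ord v; have := hp; lia.
  have := closed_connect cl cxy; rewrite !inE.
  have xz' : x != z by apply: contraNneq zT => <-.
  have yz' : y != z by apply: contraNneq zT => <-.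
  have : (x:nat) != (z:nat) by []. have : (y:nat) != (z:nat) by [].
  lia.
- move=> oT [v vT vn]; apply/negPn/negP => pT.
  have cov : connect (R T) o v by have := C o; rewrite oT /= => /forallP/(_ v); rewrite vT.
  pose A := [pred u : V | (u:nat) == n].
  have cl : closed (R T) A.
    move=> u w /= /and3P[uT wT]; rewrite /G /almost_path_edge => e.
    have up : (u:nat) != p.
      apply/eqP => e'; have eu : u = pv by apply: val_inj; rewrite /= pvE.
      by move: pT; rewrite -eu uT.
    have wp : (w:nat) != p.
      apply/eqP => e'; have eu : w = pv by apply: val_inj; rewrite /= pvE.
      by move: pT; rewrite -eu wT.
    rewrite !inE; have := ltn_ord u; have := ltn_ord w; have := hp; lia.
  have := closed_connect cl cov; rewrite !inE /=; lia.
Qed.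

Lemma conn_path (T : {set V}) (a : V) d : (a + d < n)%N -> (forall z : V, (a <= z <= a + d)%N -> z \in T) ->
  connect (R T) a (inord (a + d)).
Proof.
elim: d => [|d IH] h H.
  by rewrite addn0 inord_val connect0.
apply: connect_trans (IH _ _) _; first lia.
  by move=> z /andP[h1 h2]; apply: H; lia.
apply: connect1 => /=; rewrite !H ?inordK //; try lia.
rewrite /G /almost_path_edge !inordK; lia.
Qed.

Lemma conn_path2 (T : {set V}) (a b : V) : (a <= b < n)%N -> (forall z : V, (a <= z <= b)%N -> z \in T) ->
  connect (R T) a b.
Proof.
move=> /andP[ab bn] H.
have -> : b = inord (a + (b - a)) by apply: val_inj => /=; rewrite inordK; lia.
by apply: conn_path; [lia| move=> z hz; apply: H; lia].
Qed.

Lemma conv_conn T : convP T -> induced_connected G T.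
Proof.
move=> [C1 C2].
have Cs := sym_connect_sym (R_sym T).
have pp : forall x y : V, x \in T -> y \in T -> (x < n)%N -> (y < n)%N -> connect (R T) x y.
  move=> x y xT yT xn yn; case: (leqP x y) => xy.
    by apply: conn_path2; [lia| move=> z hz; apply: C1 xT yT _ _; lia].
  rewrite Cs; apply: conn_path2; [lia| move=> z hz; apply: C1 yT xT _ _; lia].
have po : forall x : V, x \in T -> (x < n)%N -> o \in T -> connect (R T) x o.
  move=> x xT xn oT; have pT : pv \in T by apply: C2 => //; exists x.
  apply: connect_trans (pp _ _ xT pT xn _) _; first by rewrite pvE hp.
  apply: connect1 => /=; rewrite pT oT /G /almost_path_edge pvE /=; lia.
apply/forallP => x; apply/implyP => xT; apply/forallP => y; apply/implyP => yT.
case: (eqVneq x o) => [ex|xo]; case: (eqVneq y o) => [ey|yo].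
- by rewrite ex ey; exact: connect0.
- by rewrite ex Cs; apply: po => //; [apply: ltn_o | rewrite -ex].
- by rewrite ey; apply: po => //; [apply: ltn_o | rewrite -ey].
- by apply: pp => //; apply: ltn_o.
Qed.

Definition Iv c d : {set V} := [set i : V | (c <= i <= d)%N && (i < n)%N].

Definition shape (T : {set V}) :=
  (exists c d, (c <= d < n)%N /\ T = Iv c d) \/
  (exists c d, (c <= p <= d)%N /\ (d < n)%N /\ T = o |: Iv c d) \/ T = [set o].

Lemma o_Iv c d : o \notin Iv c d.
Proof. by rewrite inE /=; lia. Qed.

Lemma conv_shape T : T != set0 -> convP T -> shape T.
Proof.
move=> T0 [C1 C2].
set P := T :\ o.
have hP : forall i : V, (i \in P) = (i \in T) && (i < n)%N.
  move=> i; rewrite !inE oE; have := ltn_ord i; case: (i \in T); lia.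
case: (set_0Vmem P) => [P0 | [x0 x0P]].
  right; right; apply/setP => i; rewrite inE.
  case/set0Pn: T0 => x xT.
  have xo : x = o.
    apply/eqP; apply/negPn/negP => xo; have := ltn_o xo => xn.
    by have := hP x; rewrite P0 inE xT xn.
  apply/idP/idP => [iT| /eqP ->]; last by rewrite -xo.
  apply/negPn/negP => io; have := ltn_o io => iN.
  by have := hP i; rewrite P0 inE iT iN.
case: (@arg_minnP _ x0 (mem P) id x0P) => c cP cmin.
case: (@arg_maxnP _ x0 (mem P) id x0P) => d dP dmax.
have cd : (c <= d)%N by apply: cmin.
have cP' : c \in P by []. have dP' : d \in P by [].
move: (cP') (dP'); rewrite !hP => /andP[cT cn] /andP[dT dn].
have PE : P = Iv c d.
  apply/setP => i; rewrite hP inE; apply/idP/idP.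
    move=> /andP[iT iN]; have iP : i \in P by rewrite hP iT iN.
    by rewrite iN andbT (cmin i iP) ; apply: (dmax i iP).
  by move=> /andP[/andP[ci id] iN]; rewrite iN (C1 c d) ?ci.
case: (boolP (o \in T)) => oT.
  right; left; exists c, d; split; last split => //.
    have pT : pv \in T by apply: C2 => //; exists c.
    have pP : pv \in P by rewrite hP pT pvE hp.
    by move: pP; rewrite PE inE pvE => /andP[].
  apply/setP => i; rewrite in_setU1 -PE hP.
  case: (eqVneq i o) => [->|io] /=; first by rewrite oT.
  by rewrite (ltn_o io) andbT.
left; exists c, d; split; first by rewrite cd.
apply/setP => i; rewrite -PE hP.
case: (eqVneq i o) => [->|io] /=; first by rewrite (negbTE oT).
by rewrite (ltn_o io) andbT.
Qed.

Lemma shape_conv T : shape T -> T != set0 /\ convP T.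
Proof.
case=> [[c [d [/andP[cd dn] ->]]]|[[c [d [/andP[cp pd] [dn ->]]]]| ->]].
- split.
    by apply/set0Pn; exists (inord c); rewrite inE inordK; lia.
  split; first by move=> x y z; rewrite !inE; lia.
  by rewrite (negbTE (o_Iv _ _)).
- split; first by apply/set0Pn; exists o; rewrite setU11.
  split.
    move=> x y z; rewrite !in_setU1 !inE !oE; have := ltn_ord x; lia.
  by move=> _ _; rewrite in_setU1 inE pvE; apply/orP; right; lia.
- split; first by apply/set0Pn; exists o; rewrite inE.
  split; first by move=> x y z; rewrite !inE !oE; lia.
  by move=> _ [v]; rewrite inE oE; lia.
Qed.

Lemma cs_shape T : (T \in connected_sets G) <-> shape T.
Proof.
rewrite inE; split.
  by case/andP => T0 C; apply: conv_shape => //; apply: conn_conv.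
by case/shape_conv => T0 C; rewrite T0 conv_conn.
Qed.

Lemma card_Iv c d : (c <= d.+1)%N -> (d < n)%N -> #|Iv c d| = (d.+1 - c)%N.
Proof.
move=> cd dn.
have -> : Iv c d = [set (inord (c + j) : V) | j : 'I_(d.+1 - c)].
  apply/setP => i; rewrite inE; apply/idP/imsetP.
    move=> h; have lt : (i - c < d.+1 - c)%N by lia.
    by exists (Ordinal lt) => //; apply: val_inj; rewrite /= inordK; lia.
  by case=> j _ ->; rewrite inordK; have := ltn_ord j; lia.
rewrite card_imset ?card_ord // => j1 j2 /(congr1 val).
rewrite /= !inordK; first by move=> h; apply: val_inj => /=; lia.
  all: have := ltn_ord j1; have := ltn_ord j2; lia.
Qed.

Lemma card_oIv c d : (c <= d.+1)%N -> (d < n)%N -> #|o |: Iv c d| = (d.+1 - c).+1%N.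
Proof. by move=> cd dn; rewrite cardsU1 o_Iv card_Iv. Qed.

Lemma shape_leaf T : shape T -> (2 <= #|T|)%N ->
  exists T', shape T' /\ T' \subset T /\ #|T'| = #|T|.-1.
Proof.
case=> [[c [d [/andP[cd dn] ->]]]|[[c [d [/andP[cp pd] [dn ->]]]]| ->]].
- rewrite card_Iv; try lia => h.
  exists (Iv c d.-1); split; first by left; exists c, d.-1; split => //; lia.
  split; first by apply/subsetP => i; rewrite !inE; lia.
  by rewrite card_Iv; lia.
- rewrite card_oIv; try lia => _.
  case: (ltnP p d) => pd'.
    exists (o |: Iv c d.-1); split; first by right; left; exists c, d.-1; split; [lia | split; [lia|]].
    split; first by apply/subsetP => i; rewrite !in_setU1 !inE; lia.
    by rewrite card_oIv; lia.
  case: (ltnP c p) => cp'.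
    exists (o |: Iv c.+1 d); split; first by right; left; exists c.+1, d; split; [lia | split; [lia|]].
    split; first by apply/subsetP => i; rewrite !in_setU1 !inE; lia.
    by rewrite card_oIv; lia.
  exists (Iv p p); split; first by left; exists p, p; split => //; have := hp; lia.
  split; first by apply/subsetP => i; rewrite !in_setU1 !inE; lia.
  by rewrite card_Iv; have := hp; lia.
- by rewrite cards1.
Qed.

Lemma shape_sub T j : shape T -> (1 <= j <= #|T|)%N ->
  exists T', shape T' /\ T' \subset T /\ #|T'| = j.
Proof.
move=> sT hj; move: {2}(#|T| - j)%N (erefl (#|T| - j)%N) => e.
elim: e T sT hj => [|e IH] T sT hj he.
  by exists T; split => //; split => //; lia.
have [T1 [s1 [sub1 c1]]] := shape_leaf sT (ltac:(lia)).
have [T2 [s2 [sub2 c2]]] := IH T1 s1 (ltac:(lia)) (ltac:(lia)).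
by exists T2; split => //; split => //; apply: subset_trans sub2 sub1.
Qed.

Local Open Scope nat_scope.

Lemma mod_close a b h : (0 < h)%N -> a %% h = b %% h -> (a <= b)%N -> (b < a + h)%N -> a = b.
Proof.
move=> h0 e ab bah.
have : (h %| b - a)%N by rewrite -eqn_mod_dvd // e.
case: (posnP (b - a)) => [z|pos]; first lia.
by move=> /(dvdn_leq pos); lia.
Qed.

Lemma mod_close2 a b h : (0 < h)%N -> a %% h = b %% h -> (b < a + h)%N -> (a < b + h)%N -> a = b.
Proof.
move=> h0 e h1 h2; case: (leqP a b) => ab; first exact: (mod_close h0 e ab).
by apply/esym; apply: (mod_close h0 (esym e)); lia.
Qed.

Lemma mod_exists c r h : (0 < h)%N -> exists2 t, (t < h)%N & (c + t) %% h = r %% h.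
Proof.
move=> h0; have cl := ltn_pmod c h0; have rl := ltn_pmod r h0.
case: (leqP (c %% h) (r %% h)) => cr.
  exists (r %% h - c %% h)%N; first lia.
  rewrite {1}(divn_eq c h) -addnA (_ : (c %% h + (r %% h - c %% h) = r %% h)%N); last lia.
  by rewrite modnMDl modn_mod.
exists (r %% h + h - c %% h)%N; first lia.
rewrite {1}(divn_eq c h) -addnA (_ : (c %% h + (r %% h + h - c %% h) = r %% h + h)%N); last lia.
by rewrite modnMDl modnDr modn_mod.
Qed.

Definition xr h r : 'rV[rat]_(n.+1) :=
  vec (fun i : V => if (i < n)%N && (i %% h == r %% h) then (1 - h%:R)%R else 1%R).
Definition cnt h r (T : {set V}) := #|[set i in T | (i < n)%N && (i %% h == r %% h)]|.

Lemma sum_xr h r T : sumv (xr h r) T = (#|T|%:R - h%:R * (cnt h r T)%:R)%R.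
Proof.
rewrite sumv_vec.
rewrite (eq_bigr (fun i : V => (1 - h%:R * (((i < n) && (i %% h == r %% h))%N)%:R)%R)); last first.
  by move=> i _; case: ifP; rewrite ?mulr1 ?mulr0 ?subr0.
rewrite sumrB sumr_const -mulr_sumr -natr_sum; congr (_ - _ * _)%R; congr (_%:R)%R.
rewrite /cnt -sum1_card [RHS]big_mkcond /= big_mkcond /=; apply: eq_bigr => i _.
rewrite inE; case: (i \in T) => //=; by case: (_ && _)%N.
Qed.

Lemma cnt_oU h r T : cnt h r (o |: T) = cnt h r T.
Proof.
rewrite /cnt; apply: eq_card => i; rewrite !inE oE.
by case: (i \in T); rewrite ?orbT ?orbF //; case: eqP => //= ->; rewrite ltnn.
Qed.

Lemma cnt_le1 h r c d : (0 < h)%N -> (d.+1 - c <= h)%N -> (cnt h r (Iv c d) <= 1)%N.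
Proof.
move=> h0 len; apply/card_le1_eqP => i j; rewrite !inE.
move=> /and3P[/andP[/andP[ci id] _] _ /eqP ei] /and3P[/andP[/andP[cj jd] _] _ /eqP ej].
apply: val_inj => /=.
by apply: (mod_close2 h0); [rewrite ei ej| lia | lia].
Qed.

Lemma cnt_gt0 h r (T : {set V}) (i : V) : i \in T -> (i < n)%N -> i %% h = r %% h -> (0 < cnt h r T)%N.
Proof. by move=> iT iN ie; apply/card_gt0P; exists i; rewrite !inE iT iN ie eqxx. Qed.

Lemma cnt_win h r c d : (0 < h)%N -> (d.+1 - c = h)%N -> (d < n)%N -> cnt h r (Iv c d) = 1%N.
Proof.
move=> h0 len dn; apply/eqP; rewrite eqn_leq cnt_le1 ?len //=.
have [t th e] := mod_exists c r h0.
by apply: (@cnt_gt0 _ _ _ (inord (c + t))); rewrite ?inE inordK //; lia.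
Qed.

Lemma cnt_p h c d : (0 < h)%N -> (d.+1 - c <= h)%N -> (d < n)%N -> (c <= p <= d)%N ->
  cnt h p (o |: Iv c d) = 1%N.
Proof.
move=> h0 len dn cpd; rewrite cnt_oU; apply/eqP; rewrite eqn_leq cnt_le1 //=.
by apply: (@cnt_gt0 _ _ _ pv); rewrite ?inE pvE //; lia.
Qed.

Lemma cnt_S h c d : (0 < h)%N -> (d.+2 = c + h)%N -> cnt h (c + h).-1 (o |: Iv c d) = 0%N.
Proof.
move=> h0 len; rewrite cnt_oU; apply/eqP; rewrite cards_eq0; apply/eqP/setP => i.
rewrite !inE; apply/negP => /and3P[/andP[/andP[ci id] _] _ /eqP e].
have := mod_close h0 e (ltac:(lia)) (ltac:(lia)); lia.
Qed.

Lemma cnt_T h c d c' d' : (0 < h)%N -> (d.+2 = c + h)%N -> (d'.+2 = c' + h)%N ->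
  (c <= p <= d)%N -> (c' <= p <= d')%N -> (d' < n)%N -> c != c' ->
  cnt h (c + h).-1 (o |: Iv c' d') = 1%N.
Proof.
move=> h0 l1 l2 cp cp' dn ne; rewrite cnt_oU; apply/eqP; rewrite eqn_leq cnt_le1 //=; last lia.
have [t th e] := mod_exists c' (c + h).-1 h0.
have tne : t != h.-1.
  apply/eqP => et; move: e; rewrite et => e.
  have := mod_close2 h0 e (ltac:(lia)) (ltac:(lia)); lia.
by apply: (@cnt_gt0 _ _ _ (inord (c' + t))); rewrite ?inE inordK //; lia.
Qed.

Lemma sum_small h r (J : {set V}) : (0 < #|J| < h)%N -> sumv (xr h r) J != 0%R.
Proof.
move=> /andP[j0 jh]; rewrite sum_xr subr_eq0 -natrM eqr_nat.
case: (posnP (cnt h r J)) => [->|c0]; first by rewrite muln0; lia.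
by apply/eqP => e; have := leq_pmulr h c0; lia.
Qed.

Definition CS := connected_sets G.

Lemma CSE X : (X \in CS) = (X != set0) && induced_connected G X.
Proof. by rewrite inE. Qed.

Lemma CS_Iv c d : (c <= d < n)%N -> Iv c d \in CS.
Proof. by move=> h; apply/cs_shape; left; exists c, d. Qed.
Lemma CS_oIv c d : (c <= p <= d)%N -> (d < n)%N -> o |: Iv c d \in CS.
Proof. by move=> h1 h2; apply/cs_shape; right; left; exists c, d. Qed.
Lemma CS_o : [set o] \in CS.
Proof. by apply/cs_shape; right; right. Qed.

Definition Jset (I : {set V}) (a0 : V) : {set {set V}} :=
  [set J : {set V} | [&& J \subset I, a0 \in J, J != I, J \in CS & (I :\: J) \in CS]].

Lemma count_split I : I \in CS -> exists2 a0, a0 \in I & #|Jset I a0| = #|I|.-1.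
Proof.
move=> /cs_shape [[c [d [/andP[cd dn] ->]]]|[[c [d [/andP[cp pd] [dn ->]]]]| ->]].
-
  set a0 : V := inord c.
  have a0E : (a0 : nat) = c by rewrite inordK //; lia.
  have a0I : a0 \in Iv c d by rewrite inE a0E; lia.
  exists a0 => //.
  pose phi (v : V) := [set u in Iv c d | (u < v)%N].
  have -> : Jset (Iv c d) a0 = phi @: (Iv c d :\ a0).
    apply/setP => J; rewrite inE; apply/idP/imsetP.
    + move=> /and5P[sub aJ ne /cs_shape sJ _].
      case: sJ => [[c' [d' [/andP[cd' dn'] EJ]]]|[[c' [d' [_ [_ EJ]]]]| EJ]]; last first.
      * by move: sub; rewrite EJ => /subsetP/(_ o); rewrite inE eqxx (negbTE (o_Iv _ _)) => /(_ isT).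
      * by move: sub; rewrite EJ => /subsetP/(_ o); rewrite setU11 (negbTE (o_Iv _ _)) => /(_ isT).
      have c'I : (inord c' : V) \in Iv c d.
        by apply: (subsetP sub); rewrite EJ inE inordK; lia.
      have d'I : (inord d' : V) \in Iv c d.
        by apply: (subsetP sub); rewrite EJ inE inordK; lia.
      move: c'I d'I aJ; rewrite !inE !inordK ?EJ ?inE ?a0E; try lia.
      move=> h1 h2 h3.
      have dd : (d' < d)%N.
        rewrite ltn_neqAle; apply/andP; split; last lia.
        apply: contra ne => /eqP e; rewrite EJ; apply/eqP/setP => u; rewrite !inE; lia.
      exists (inord d'.+1).
        by rewrite !inE -val_eqE /= inordK ?a0E; lia.
      by apply/setP => u; rewrite /phi !inE inordK; lia.
    + case=> v vIn ->; move: vIn; rewrite !inE => /andP[va /andP[cvd vn]].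
      have cv : (c < v)%N by move: va; rewrite -val_eqE /= a0E; lia.
      have E1 : phi v = Iv c v.-1 by apply/setP => u; rewrite !inE; lia.
      have E2 : Iv c d :\: phi v = Iv v d by apply/setP => u; rewrite !inE; lia.
      apply/and5P; split.
      * by apply/subsetP => u; rewrite inE => /andP[].
      * by rewrite a0E; lia.
      * by apply/eqP => /setP/(_ v); rewrite !inE ltnn; lia.
      * by rewrite E1; rewrite -?CSE; apply: CS_Iv; lia.
      * by rewrite E2; rewrite -?CSE; apply: CS_Iv; lia.
  rewrite card_in_imset; first by rewrite [in RHS](cardsD1 a0) a0I.
  move=> v w; rewrite !inE => /andP[_ /andP[vI vn]] /andP[_ /andP[wI wn]] e.
  apply/eqP; apply/negP => ne.
  case: (ltngtP v w) => vw.
  + by have := congr1 (fun X : {set V} => v \in X) e; rewrite /= !inE ltnn vw; lia.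
  + by have := congr1 (fun X : {set V} => w \in X) e; rewrite /= !inE ltnn vw; lia.
  + by apply: ne; apply/eqP; apply: val_inj.
-
  exists o; first by rewrite setU11.
  set I0 := o |: Iv c d.
  have inI0 : forall u : V, (u \in I0) = (u == o) || (c <= u <= d)%N && (u < n)%N.
    by move=> u; rewrite !inE.
  pose phi (v : V) := [set u in I0 | (u == o) || ((v < p) && (v < u))%N || ((p < v) && (u < v))%N].
  have -> : Jset I0 o = phi @: (I0 :\ o).
    apply/setP => J; rewrite inE; apply/idP/imsetP.
    + move=> /and5P[sub oJ ne /cs_shape sJ IJ].
      case: sJ => [[c' [d' [_ EJ]]]|[[c' [d' [/andP[cp' pd'] [dn' EJ]]]]| EJ]].
      * by move: oJ; rewrite EJ (negbTE (o_Iv _ _)).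
      * have c'I : (inord c' : V) \in I0 by apply: (subsetP sub); rewrite EJ !inE inordK; lia.
        have d'I : (inord d' : V) \in I0 by apply: (subsetP sub); rewrite EJ !inE inordK; lia.
        move: c'I d'I; rewrite !inI0 -!val_eqE /= !inordK; try lia.
        move=> h1 h2.
        have [_ [C1 _]] := shape_conv (proj1 (cs_shape _) IJ).
        have cne : ~~ ((c < c') && (d' < d))%N.
          apply/negP => /andP[h3 h4].
          have xI : (inord c : V) \in I0 :\: J by rewrite EJ !inE -!val_eqE /= !inordK; lia.
          have yI : (inord d : V) \in I0 :\: J by rewrite EJ !inE -!val_eqE /= !inordK; lia.
          have := C1 _ _ pv xI yI; rewrite !inordK ?pvE; try lia.
          by rewrite EJ !inE pvE; lia.
        have : (c < c')%N || (d' < d)%N.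
          apply/negPn/negP => h; apply: (negP ne); apply/eqP; rewrite EJ /I0.
          by apply/setP => u; rewrite !inE; lia.
        case/orP => h3.
          exists (inord c'.-1); first by rewrite !inE -val_eqE /= inordK; lia.
          by rewrite EJ; apply/setP => u; rewrite /phi !inE inordK; lia.
        exists (inord d'.+1); first by rewrite !inE -val_eqE /= inordK; lia.
        by rewrite EJ; apply/setP => u; rewrite /phi !inE inordK; lia.
      * exists pv; first by rewrite !inE -val_eqE /= pvE; have := hp; lia.
        by rewrite EJ; apply/setP => u; rewrite /phi !inE !oE pvE; have := ltn_ord u; lia.
    + case=> v vIn ->; move: vIn; rewrite !inE => /andP[vo /orP[/eqP vo'|/andP[cvd vn]]].
        by move: vo; rewrite vo' eqxx.
      have vo2 : (v : nat) != n by rewrite -oE.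
      apply/and5P; split.
      * by apply/subsetP => u; rewrite inE => /andP[].
      * by rewrite eqxx.
      * by apply/eqP => /setP/(_ v); rewrite /phi !inE; lia.
      * case: (ltngtP v p) => vp.
        - have -> : phi v = o |: Iv v.+1 d by apply/setP => u; rewrite /phi !inE ?oE; have := ltn_ord u; lia.
          by rewrite -?CSE; apply: CS_oIv; lia.
        - have -> : phi v = o |: Iv c v.-1 by apply/setP => u; rewrite /phi !inE ?oE; have := ltn_ord u; lia.
          by rewrite -?CSE; apply: CS_oIv; lia.
        - have -> : phi v = [set o] by apply/setP => u; rewrite /phi !inE ?oE; have := ltn_ord u; lia.
          rewrite -?CSE; exact: CS_o.
      * case: (ltngtP v p) => vp.
        - have -> : I0 :\: phi v = Iv c v by apply/setP => u; rewrite /phi !inE ?oE; have := ltn_ord u; lia.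
          by rewrite -?CSE; apply: CS_Iv; lia.
        - have -> : I0 :\: phi v = Iv v d by apply/setP => u; rewrite /phi !inE ?oE; have := ltn_ord u; lia.
          by rewrite -?CSE; apply: CS_Iv; lia.
        - have -> : I0 :\: phi v = Iv c d by apply/setP => u; rewrite /phi !inE ?oE; have := ltn_ord u; lia.
          by rewrite -?CSE; apply: CS_Iv; lia.
  rewrite card_in_imset; first by rewrite [in RHS](cardsD1 o) setU11.
  move=> v w; rewrite !inE => /andP[vo /orP[/eqP vo'|/andP[cvd vn]]]; first by move: vo; rewrite vo' eqxx.
  move=> /andP[wo /orP[/eqP wo'|/andP[cwd wn]]]; first by move: wo; rewrite wo' eqxx.
  move=> e; apply/eqP/negPn/negP => ne.
  have ne' : (v : nat) != w by [].
  have := congr1 (fun X : {set V} => v \in X) e; have := congr1 (fun X : {set V} => w \in X) e.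
  rewrite /phi /= !inE (negbTE vo) (negbTE wo) /=.
  have := ltn_ord v; have := ltn_ord w; rewrite !oE in vo wo; lia.
- exists o; first by rewrite inE.
  rewrite cards1 /=; apply/eqP; rewrite cards_eq0; apply/eqP/setP => J; rewrite !inE.
  apply/negP => /and5P[sub oJ ne _ _]; apply: (negP ne); rewrite eqEsubset sub /=.
  by rewrite sub1set.
Qed.

Definition key (T : {set V}) := \max_(i in T) (i : nat).

Lemma key_o (T : {set V}) : o \in T -> key T = n.
Proof.
move=> oT; apply/eqP; rewrite eqn_leq; apply/andP; split.
  by apply/bigmax_leqP => i _; have := ltn_ord i; lia.
by have := @leq_bigmax_cond _ (mem T) (fun i : V => (i : nat)) o oT.
Qed.

Lemma key_Iv c d : (c <= d < n)%N -> key (Iv c d) = d.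
Proof.
move=> cd; apply/eqP; rewrite eqn_leq; apply/andP; split.
  by apply/bigmax_leqP => i; rewrite inE; lia.
have dI : (inord d : V) \in Iv c d by rewrite inE inordK; lia.
by have := @leq_bigmax_cond _ (mem (Iv c d)) (fun i : V => (i : nat)) _ dI; rewrite inordK //; lia.
Qed.

Lemma card_o1 (T : {set V}) : o \in T -> #|T| = 1%N -> T = [set o].
Proof.
move=> oT c1; apply/eqP; rewrite eq_sym eqEcard sub1set oT cards1 c1 /=; by [].
Qed.

Variable Id : {set {set V}}.
Hypothesis HId : lower_ideal G Id.

Lemma Id_CS J : J \in Id -> J \in CS.
Proof. by move=> JI; apply: (subsetP HId.1). Qed.
Lemma Id_shape J : J \in Id -> shape J.
Proof. by move=> /Id_CS /cs_shape. Qed.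
Lemma Id_ne J : J \in Id -> J != set0.
Proof. by move=> /Id_CS; rewrite inE => /andP[]. Qed.
Lemma Id_gt0 J : J \in Id -> (0 < #|J|)%N.
Proof. by move=> /Id_ne; rewrite card_gt0. Qed.
Lemma Id_sub I J : I \in Id -> J \in CS -> J \subset I -> J \in Id.
Proof. by move=> II JC sub; apply: HId.2 II JC sub. Qed.

Definition leK := [rel S T : {set V} | (key S <= key T)%N].
Definition Sb h := sort leK [seq J <- enum Id | #|(J : {set V})| == h].
Definition rmax := \max_(J in Id) #|(J : {set V})|.
Definition LK j := flatten [seq Sb h | h <- iota 1 j].
Definition pis := [seq map (@hyp n.+1) (Sb h) | h <- iota 1 rmax].

Lemma mem_Sb h J : (J \in Sb h) = (J \in Id) && (#|J| == h).
Proof. by rewrite mem_sort mem_filter mem_enum andbC. Qed.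
Lemma uniq_Sb h : uniq (Sb h).
Proof. by rewrite sort_uniq filter_uniq // enum_uniq. Qed.
Lemma LKS j : LK j.+1 = LK j ++ Sb j.+1.
Proof.
rewrite /LK (_ : iota 1 j.+1 = iota 1 j ++ [:: j.+1]); last by have := iotaD 1 j 1; rewrite addn1 add1n.
by rewrite map_cat flatten_cat /= cats0.
Qed.
Lemma mem_LK j J : (J \in LK j) = (J \in Id) && (#|J| <= j)%N.
Proof.
elim: j => [|j IH]; first by rewrite /LK /= in_nil; case: (boolP (J \in Id)) => // /Id_gt0; rewrite /= leqn0; case: (#|J|).
rewrite LKS mem_cat IH mem_Sb; case: (J \in Id) => //=; lia.
Qed.
Lemma uniq_LK j : uniq (LK j).
Proof.
elim: j => [|j IH]; first by [].
rewrite LKS cat_uniq IH uniq_Sb andbT /=; apply/hasPn => J.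
by rewrite mem_Sb mem_LK => /andP[_ /eqP ->]; rewrite ltnn andbF.
Qed.

Lemma rmax_ge J : J \in Id -> (#|J| <= rmax)%N.
Proof. by move=> JI; apply: (@leq_bigmax_cond _ (mem Id) (fun J : {set V} => #|J|)). Qed.

Lemma Sb_ne h : (1 <= h <= rmax)%N -> Sb h != [::].
Proof.
move=> /andP[h1 hr].
case: (posnP #|Id|) => [/eqP|c0].
  rewrite cards_eq0 => /eqP I0; move: hr; rewrite /rmax.
  by rewrite I0 big_set0; lia.
have [I II eI] := @eq_bigmax_cond _ (mem Id) (fun J : {set V} => #|J|) c0.
have IR : #|I| = rmax by rewrite -eI.
have hI : (1 <= h <= #|I|)%N by rewrite IR h1 hr.
have [T [sT [sub cT]]] := shape_sub (Id_shape II) hI.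
have TI : T \in Id by apply: Id_sub II _ sub; apply/cs_shape.
have : T \in Sb h by rewrite mem_Sb TI cT eqxx.
by case: (Sb h).
Qed.

Lemma xr_in h r T : cnt h r T = 1%N -> #|T| = h -> xr h r \in hyp T.
Proof. by move=> c1 Th; rewrite mem_hyp sum_xr c1 Th mulr1 subrr eqxx. Qed.
Lemma xr_out h r T : cnt h r T = 0%N -> #|T| = h -> (0 < h)%N -> xr h r \notin hyp T.
Proof. by move=> c1 Th h0; rewrite mem_hyp sum_xr c1 Th mulr0 subr0 pnatr_eq0 -lt0n. Qed.

Lemma witnessed_Sb h : (0 < h)%N -> witnessed (Sb h).
Proof.
move=> h0 i ilt.
have us : uniq (Sb h) := uniq_Sb h.
have srt : sorted leK (Sb h) by apply: sort_sorted => S T /=; exact: leq_total.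
have SIn : nth set0 (Sb h) i \in Sb h := mem_nth set0 ilt.
move: (SIn); rewrite mem_Sb => /andP[SId /eqP Sh].
have earlier : forall j, (j < i)%N ->
   [/\ (key (nth set0 (Sb h) j) <= key (nth set0 (Sb h) i))%N, nth set0 (Sb h) j != nth set0 (Sb h) i,
       nth set0 (Sb h) j \in Id & #|nth set0 (Sb h) j| = h].
  move=> j ji; have js : (j < size (Sb h))%N by lia.
  have := mem_nth set0 js; rewrite mem_Sb => /andP[TI /eqP Th]; split => //.
  - apply: (sorted_leq_nth _ _ set0 srt); try (by rewrite inE); try lia.
      by move=> a b c; apply: leq_trans.
    by move=> a; exact: leqnn.
  - by rewrite nth_uniq // neq_ltn ji.
have other : forall T, T \in Sb h -> T != nth set0 (Sb h) i -> T \in Id /\ #|T| = h.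
  by move=> T; rewrite mem_Sb => /andP[TI /eqP Th].
move: (nth set0 (Sb h) i) SIn SId Sh earlier other => S SIn SId Sh earlier other.
case: (Id_shape SId) => [[c [d [/andP[cd dn] ES]]]|[[c [d [/andP[cp pd] [dn ES]]]]| ES]].
-
  have dS : key S = d by rewrite ES key_Iv //; lia.
  exists (ev (inord d)); split; last by apply: ev_in; rewrite ES inE inordK; lia.
  move=> j ji; have [kle ne TI Th] := earlier j ji.
  move: (nth set0 (Sb h) j) kle ne TI Th => T kle ne TI Th.
  apply: ev_out.
  case: (Id_shape TI) => [[c' [d' [/andP[cd' dn'] ET]]]|[[c' [d' [_ [_ ET]]]]| ET]].
  + have kT : key T = d' by rewrite ET key_Iv //; lia.
    move: Th Sh; rewrite ET ES !card_Iv; try lia.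
    move=> e1 e2.
    have Td : d' != d.
      apply: contra ne => /eqP dd; have cc : c' = c by lia.
      by rewrite ET ES cc dd.
    by rewrite inE inordK; lia.
  + by have := kle; rewrite dS (key_o (_ : o \in T)) ?ET ?setU11 //; lia.
  + by have := kle; rewrite dS (key_o (_ : o \in T)) ?ET ?inE //; lia.
-
  have hS : h = (d.+1 - c).+1 by rewrite -Sh ES card_oIv //; lia.
  exists (xr h (c + h).-1); split; last first.
    apply: xr_out => //; rewrite ES cnt_S //; lia.
  move=> j ji; have [kle ne TI Th] := earlier j ji.
  move: (nth set0 (Sb h) j) kle ne TI Th => T kle ne TI Th.
  apply: xr_in => //.
  case: (Id_shape TI) => [[c' [d' [/andP[cd' dn'] ET]]]|[[c' [d' [/andP[cp' pd'] [dn' ET]]]]| ET]].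
  + by rewrite ET; apply: cnt_win => //; move: Th; rewrite ET card_Iv; lia.
  + move: Th; rewrite ET card_oIv; try lia.
    move=> Th.
    have cne : c != c'.
      apply: contra ne => /eqP cc; have dd : d' = d by lia.
      by rewrite ET ES cc dd.
    by rewrite (@cnt_T h c d c' d'); try lia.
  + by move: Th; rewrite ET cards1; lia.
-
  have h1 : h = 1%N by rewrite -Sh ES cards1.
  exists (ev o); split; last by apply: ev_in; rewrite ES inE.
  move=> j ji; have [kle ne TI Th] := earlier j ji.
  move: (nth set0 (Sb h) j) kle ne TI Th => T kle ne TI Th.
  apply: ev_out; apply: contra ne => oT; rewrite ES; apply/eqP; apply: card_o1 => //; lia.
Qed.

Lemma nth_pis j : (j < rmax)%N -> nth [::] pis j = map (@hyp n.+1) (Sb j.+1).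
Proof. by move=> jr; rewrite /pis (nth_map 0%N) ?size_iota // nth_iota // add1n. Qed.

Lemma take_pis j : (j <= rmax)%N -> flatten (take j pis) = map (@hyp n.+1) (LK j).
Proof.
move=> jr; rewrite /pis -map_take take_iota (minn_idPl jr) /LK map_flatten.
by rewrite -map_comp.
Qed.

Lemma cond3 j I : I \in Id -> #|I| = j.+1 ->
  (size (map (@hyp n.+1) (LK j)) -
   size (undup [seq (hyp I :&: H')%VS | H' <- map (@hyp n.+1) (LK j)]))%N = j.
Proof.
move=> II Ic.
have [a0 a0I cJ] := count_split (Id_CS II).
rewrite Ic /= in cJ.
set L := LK j.
pose Q := [pred J : {set V} | J \in Jset I a0].
pose g := fun J : {set V} => (hyp I :&: hyp J)%VS.
have -> : [seq (hyp I :&: H')%VS | H' <- map (@hyp n.+1) L] = map g L by rewrite -map_comp.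
rewrite size_map.
pose L1 := filter (predC Q) L. pose L2 := filter Q L.
have sL : size L = (size L1 + size L2)%N.
  by rewrite !size_filter addnC count_predC.
have notIJ : forall J : {set V}, J \in L -> ~~ (I \subset J).
  move=> J; rewrite mem_LK => /andP[_ Jc]; apply/negP => /subset_leq_card; lia.
have inL : forall J : {set V}, J \subset I -> J != I -> J \in CS -> J \in L.
  move=> J sub ne JC; rewrite mem_LK (Id_sub II JC sub) /=.
  have : (J \proper I) by rewrite properEneq ne sub.
  by move=> /proper_card; rewrite Ic.
have sL2 : size L2 = j.
  have u2 : uniq L2 := filter_uniq _ (uniq_LK j).
  rewrite -(card_uniqP u2) -cJ; apply: eq_card => J.
  rewrite mem_filter /=; case: (boolP (J \in Jset I a0)) => //= QJ.
  by move: (QJ); rewrite inE => /and5P[sub aJ ne JC _]; apply: inL.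
have sU : size (undup (map g L)) = size L1.
  rewrite -(size_map g L1); apply: perm_size; apply: uniq_perm.
  - exact: undup_uniq.
  - rewrite map_inj_in_uniq ?filter_uniq ?uniq_LK //.
    move=> J J'; rewrite !mem_filter => /andP[nQJ JL] /andP[nQJ' JL'] e.
    have := cap_eq e (notIJ _ JL) (notIJ _ JL'); case=> // [[JI EJ']].
    exfalso.
    have JId : J \in Id by move: JL; rewrite mem_LK => /andP[].
    have J'Id : J' \in Id by move: JL'; rewrite mem_LK => /andP[].
    have JnI : J != I by apply/eqP => e'; move: JL; rewrite mem_LK e' Ic; lia.
    have J'nI : J' != I by apply/eqP => e'; move: JL'; rewrite mem_LK e' Ic; lia.
    case: (boolP (a0 \in J)) => aJ.
      move: nQJ => /negP; apply; rewrite /= inE JI aJ JnI (Id_CS JId) /= -EJ'.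
      exact: Id_CS.
    move: nQJ' => /negP; apply; rewrite /= inE; apply/and5P; split => //.
    - by rewrite EJ' subsetDl.
    - by rewrite EJ' !inE aJ a0I.
    - exact: Id_CS.
    - rewrite EJ' setDDr setDv set0U (setIidPr JI); exact: Id_CS.
  - move=> x; rewrite mem_undup; apply/mapP/mapP.
      case=> J JL ->; case: (boolP (Q J)) => QJ; last first.
        by exists J => //; rewrite mem_filter JL andbT; exact: QJ.
      move: (QJ); rewrite /= inE => /and5P[sub aJ ne JC DC].
      exists (I :\: J); last exact: cap_split.
      rewrite mem_filter /= inE !inE aJ /= andbF /=.
      apply: inL => //; first exact: subsetDl.
      by apply/eqP => /setP/(_ a0); rewrite !inE aJ a0I.
    by case=> J; rewrite mem_filter => /andP[_ JL] ->; exists J.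
rewrite sU sL; lia.
Qed.

Lemma MAT_main : MAT_free (ideal_arr Id).
Proof.
exists pis; split; [|split].
- apply/allP => pi /mapP[h]; rewrite mem_iota => /andP[h1 h2] ->.
  by rewrite -size_eq0 size_map size_eq0; apply: Sb_ne; lia.
- rewrite -(take_size pis) take_pis; last by rewrite size_map size_iota.
  rewrite size_map size_iota /ideal_arr undup_id ?undup_uniq //.
  apply: uniq_perm.
  + by rewrite map_inj_uniq ?uniq_LK //; exact: hyp_inj.
  + exact: undup_uniq.
  + move=> H; rewrite mem_undup; apply: eq_mem_map => J.
    rewrite mem_LK mem_enum; case: (boolP (J \in Id)) => //= JI.
    exact: rmax_ge.
- move=> j; rewrite size_map size_iota => jlt /=.
  rewrite nth_pis // take_pis; last lia.
  split; [|split].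
  + have ne : all (fun J => J != set0) (Sb j.+1).
      by apply/allP => J; rewrite mem_Sb => /andP[JI _]; exact: Id_ne.
    have := @dim_witnessed n.+1 (Sb j.+1) ne (witnessed_Sb (ltn0Sn j)).
    rewrite dim_full size_map => e.
    by rewrite -{1}e addKn.
  + case: j jlt => [|j] jlt.
      by exists 0%R; [exact: mem0v| move=> H'; rewrite /LK /=].
    exists (xr j.+2 p).
      rewrite mem_bigcap; apply/allP => H /mapP[S]; rewrite mem_Sb => /andP[SI /eqP Sh] ->.
      apply: xr_in => //.
      case: (Id_shape SI) => [[c [d [/andP[cd dn] ES]]]|[[c [d [/andP[cp pd] [dn ES]]]]| ES]].
      * by rewrite ES; apply: cnt_win => //; move: Sh; rewrite ES card_Iv; lia.
      * move: Sh; rewrite ES card_oIv; try lia.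
        by move=> Sh; apply: cnt_p => //; lia.
      * by move: Sh; rewrite ES cards1.
    move=> H' /mapP[J]; rewrite mem_LK => /andP[JI Jc] ->.
    rewrite mem_hyp; apply: sum_small; rewrite Id_gt0 //=; lia.
  + move=> H /mapP[I]; rewrite mem_Sb => /andP[II /eqP Ic] ->.
    exact: cond3.
Qed.

End Graph.

Theorem mainTheorem13 (n k : nat) (Hk1 : (1 <= k)%N) (Hkn : (k <= n)%N)
    (Id : {set {set 'I_(n.+1)}}) :
  lower_ideal (@almost_path_edge n k) Id ->
  MAT_free (ideal_arr Id).
Proof. move=> H; exact: (@MAT_main n k Hk1 Hkn Id H). Qed.
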